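(* Let $\gamma\in(0,1)$, $c\in\mathbb{R}$, $\sigma^2>0$, and $\alpha_0\in(0,1]$. Define recursively, for $n\ge2$, $$\alpha_{n-1}=\frac{(1-\gamma)\lambda^{n-1}\sigma^2+\big(1-(1-\gamma)\delta^{n-1}\big)^2c^2}{(1-\gamma)^2\lambda^{n-1}\sigma^2+\big(1-(1-\gamma)\delta^{n-1}\big)^2c^2+\sigma^2},$$ where $\delta^1=\alpha_0$, $\lambda^1=\alpha_0^2$, and for $m>1$, $\delta^m=\alpha_{m-1}+(1-(1-\gamma)\alpha_{m-1})\delta^{m-1}$, $\lambda^m=\alpha_{m-1}^2+(1-(1-\gamma)\alpha_{m-1})^2\lambda^{m-1}$. Then $\lim_{n\to\infty}\delta^n=\frac{1}{1-\gamma}$.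
   Context: The formula for $\alpha_{n-1}$ is the prediction-error-minimizing stepsize for approximate value iteration in a single-state, single-action problem with i.i.d. rewards of mean $c$, variance $\sigma^2$, and discount factor $\gamma$; $\delta^n c$ is the mean of the $n$-th value estimate. *)

(* Defs.v *)
From HB Require Import structures.
From mathcomp Require Import all_boot all_order all_algebra.
From mathcomp Require Import all_classical all_reals topology normedtype sequences.
Set Implicit Arguments. Unset Strict Implicit. Unset Printing Implicit Defensive.
Import Order.TTheory GRing.Theory Num.Theory.
Local Open Scope ring_scope.

Section Defs.
Variable R : realType.

Definition alpha_of (g s2 c d l : R) : R :=
  ((1 - g) * l * s2 + (1 - (1 - g) * d) ^+ 2 * c ^+ 2) /
  ((1 - g) ^+ 2 * l * s2 + (1 - (1 - g) * d) ^+ 2 * c ^+ 2 + s2).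

Definition dl_step (g s2 c : R) (p : R * R) : R * R :=
  let a := alpha_of g s2 c p.1 p.2 in
  (a + (1 - (1 - g) * a) * p.1, a ^+ 2 + (1 - (1 - g) * a) ^+ 2 * p.2).

(* dl k = (delta^{k+1}, lambda^{k+1}) *)
Fixpoint dl (g s2 c a0 : R) (k : nat) : R * R :=
  match k with
  | 0 => (a0, a0 ^+ 2)
  | k'.+1 => dl_step g s2 c (dl g s2 c a0 k')
  end.

(* delta^n for n >= 1 (value at n = 0 is irrelevant) *)
Definition delta (g s2 c a0 : R) (n : nat) : R := (dl g s2 c a0 n.-1).1.
Definition lambda (g s2 c a0 : R) (n : nat) : R := (dl g s2 c a0 n.-1).2.
End Defs.

(* Main.v *)
Require Import Defs.
From HB Require Import structures.
From mathcomp Require Import all_boot all_order all_algebra.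
From mathcomp Require Import all_classical all_reals topology normedtype sequences.
From mathcomp Require Import ring lra.
Import Order.TTheory GRing.Theory Num.Theory numFieldNormedType.Exports.
Local Open Scope classical_set_scope.
Local Open Scope ring_scope.

Lemma step_facts (R : realType) (g c s2 d l : R) :
  0 < 1 - g < 1 -> 0 < s2 -> 0 <= l -> 0 <= 1 - (1 - g) * d <= 1 ->
  let a := alpha_of g s2 c d l in
  let p := dl_step g s2 c (d, l) in
  [/\ 1 - (1 - g) * p.1 = (1 - (1 - g) * a) * (1 - (1 - g) * d),
      0 < 1 - (1 - g) * a <= 1,
      l <= p.2 * (1 + (1 - g) ^+ 2 * l) &
      (1 - g) ^+ 2 * l * s2 <= (1 - g) * a * ((1 - g) ^+ 2 * l * s2 + c ^+ 2 + s2)].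
Proof.
move=> hb hs hl he a p.
set b : R := 1 - g in hb he a p *.
set e : R := 1 - b * d in he *.
case/andP: he => he0 he1; case/andP: hb => hb0 hb1.
have {he0}he0 : 0 <= e by []. have {he1}he1 : e <= 1 by [].
have {hb0}hb0 : 0 < b by []. have {hb1}hb1 : b < 1 by [].
have He : 0 <= e ^+ 2 <= 1.
  by rewrite sqr_ge0 /= expr2; nra.
set E := e ^+ 2 * c ^+ 2.
have HE0 : 0 <= E by rewrite mulr_ge0 // sqr_ge0.
have HE1 : E <= c ^+ 2 by rewrite /E; rewrite -[X in _ <= X]mul1r ler_wpM2r ?sqr_ge0 //; case/andP: He.
set N := b * l * s2 + E.
set D := b ^+ 2 * l * s2 + E + s2.
have HB : 0 <= b ^+ 2 * l * s2 by rewrite !mulr_ge0 ?sqr_ge0 // ltW.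
have HB' : 0 <= b * l * s2 by rewrite !mulr_ge0 // ltW.
have HD : 0 < D by rewrite /D; lra.
have Ha : a = N / D by [].
have HN : 0 <= N by rewrite /N; lra.
have Ha0 : 0 <= a by rewrite Ha divr_ge0 // ltW.
have HaD : a * D = N by rewrite Ha divfK // gt_eqF.
have Hba : (1 - b * a) * D = (1 - b) * E + s2.
  by rewrite mulrBl mul1r -mulrA HaD /D /N; ring.
split.
- rewrite /p /= /dl_step /= -/a; rewrite -/b /e; ring.
- apply/andP; split.
  + have: 0 < (1 - b * a) * D by rewrite Hba; nra.
    by rewrite pmulr_lgt0.
  + have: 0 <= b * a by nra. lra.
- rewrite /p /= -/a -/b -subr_ge0.
  have -> : (a ^+ 2 + (1 - b * a) ^+ 2 * l) * (1 + b ^+ 2 * l) - l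
       = ((1 + b ^+ 2 * l) * a - b * l) ^+ 2 by ring.
  exact: sqr_ge0.
- have HX : D <= b ^+ 2 * l * s2 + c ^+ 2 + s2 by rewrite /D; lra.
  have Hba0 : 0 <= b * a by rewrite mulr_ge0 // ltW.
  have := ler_wpM2l Hba0 HX.
  have -> : b * a * D = b * N by rewrite -mulrA HaD.
  have HbE : 0 <= b * E by rewrite mulr_ge0 // ltW.
  have -> : b * N = b ^+ 2 * l * s2 + b * E by rewrite /N; ring.
  lra.
Qed.
Lemma lam_ind (R : realFieldType) (l l' l0 u b2 : R) :
  0 < l0 -> 0 < u -> 0 <= b2 -> 0 <= l' -> l0 <= l * u -> l <= l' * (1 + b2 * l) ->
  l0 <= l' * (u + b2 * l0).
Proof.
move=> h0 hu hb hl' h1 h2.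
have hl : 0 < l by nra.
have : l * (l' * (u + b2 * l0) - l0) >= 0.
  have : l0 * l <= l0 * (l' * (1 + b2 * l)) by rewrite ler_wpM2l // ltW.
  have : l0 * l' * b2 * l <= l' * u * l * b2 * l.
    have hh : 0 <= l' * b2 * l by rewrite !mulr_ge0 // ltW.
    have := ler_wpM2r hh h1. move=> h3. 
    have -> : l0 * l' * b2 * l = l0 * (l' * b2 * l) by ring.
    have -> : l' * u * l * b2 * l = l * u * (l' * b2 * l) by ring.
    exact: h3.
  have : l0 * l' <= l' * u * l.
    have := ler_wpM2l hl' h1. move=> h3.
    have -> : l' * u * l = l' * (l * u) by ring. by rewrite mulrC.
  move=> A B C.
  have -> : l * (l' * (u + b2 * l0) - l0) = l' * u * l + l0 * l' * b2 * l - l0 * l by ring.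
  have E1 : l0 * (l' * (1 + b2 * l)) = l0 * l' + l0 * l' * b2 * l by ring.
  lra.
by rewrite pmulr_rge0 // subr_ge0.
Qed.

Lemma x_lb (R : realFieldType) (x l l0 u P K : R) :
  0 < l0 -> 0 < l -> 0 <= x -> 0 <= P -> 0 <= K -> l0 <= l * u ->
  P * l <= x * (P * l + K) -> P * l0 <= x * (P * l0 + K * u).
Proof.
move=> h0 hl hx hP hK h1 h2.
have A : l0 * (P * l) <= l0 * (x * (P * l + K)) by rewrite ler_wpM2l // ltW.
have B : x * K * l0 <= x * K * (l * u) by rewrite ler_wpM2l // mulr_ge0.
have : 0 <= l * (x * (P * l0 + K * u) - P * l0).
  have -> : l * (x * (P * l0 + K * u) - P * l0)
     = x * K * (l * u) - x * K * l0 + (l0 * (x * (P * l + K)) - l0 * (P * l)) by ring.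
  lra.
by rewrite pmulr_rge0 // subr_ge0.
Qed.

Lemma x_h (R : realFieldType) (x k P K Q : R) :
  0 <= x -> 0 <= k -> 0 <= Q -> 0 <= P -> 0 <= K -> 0 < P + K + Q ->
  P <= x * (P + K + k * Q) -> P / (P + K + Q) <= x * (k + 1).
Proof.
move=> hx hk hQ hP hK hD h.
rewrite ler_pdivrMr //.
have : x * (P + K + k * Q) <= x * ((k + 1) * (P + K + Q)).
  apply: ler_wpM2l => //.
  have: 0 <= k * (P + K) by rewrite mulr_ge0 //; lra.
  have -> : (k + 1) * (P + K + Q) = k * (P + K) + P + K + k * Q + Q by ring.
  lra.
have -> : x * ((k + 1) * (P + K + Q)) = x * (k + 1) * (P + K + Q) by ring.
lra.
Qed.

Lemma prod_step (R : realFieldType) (e e' x S : R) :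
  0 <= e -> 0 <= S -> 0 < 1 - x <= 1 -> e' = (1 - x) * e ->
  e' * (1 + (S + x)) <= e * (1 + S).
Proof.
move=> he hS /andP[h1 h2] ->.
have hx : 0 <= x by lra.
have : 0 <= e * (x * S + x * x) by rewrite mulr_ge0 // addr_ge0 // mulr_ge0.
have -> : (1 - x) * e * (1 + (S + x)) = e * (1 + S) - e * (x * S + x * x) by ring.
lra.
Qed.

Lemma final_ineq (R : realFieldType) (e S t : R) :
  0 < t -> t^-1 < S -> e * (1 + S) <= 1 -> e < t.
Proof.
move=> ht hS he.
have h1 : 1 < t * S by rewrite -(mulfV (lt0r_neq0 ht)) ltr_pM2l.
have hS0 : 0 < S by apply: le_lt_trans hS; rewrite invr_ge0 ltW.
have h3 : t * (1 + S) = t + t * S by ring.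
have h2 : e * (1 + S) < t * (1 + S) by lra.
by rewrite ltr_pM2r in h2; lra.
Qed.

Theorem proposition5 (R : realType) (g c s2 a0 : R) :
  0 < g < 1 -> 0 < s2 -> 0 < a0 <= 1 ->
  delta g s2 c a0 @ \oo --> (1 - g)^-1.
Proof.
move=> /andP[hg0 hg1] hs /andP[ha0 ha1].
have hb : 0 < 1 - g < 1 by apply/andP; split; lra.
set b : R := 1 - g.
have hb0 : 0 < b by rewrite /b; lra.
have hb1 : b < 1 by rewrite /b; lra.
set l0 : R := a0 ^+ 2.
have hl0 : 0 < l0 by rewrite /l0 exprn_gt0.
pose e k : R := 1 - b * (dl g s2 c a0 k).1.
pose lk k : R := (dl g s2 c a0 k).2.
pose x k : R := b * alpha_of g s2 c (dl g s2 c a0 k).1 (dl g s2 c a0 k).2.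
pose u (k : nat) : R := 1 + k%:R * (b ^+ 2 * l0).
have hu k : 0 < u k.
  have : 0 <= k%:R * (b ^+ 2 * l0) by rewrite !mulr_ge0 ?sqr_ge0 // ltW.
  rewrite /u; lra.
have SF k : 0 <= lk k -> 0 <= e k <= 1 ->
  [/\ e k.+1 = (1 - x k) * e k, 0 < 1 - x k <= 1,
      lk k <= lk k.+1 * (1 + b ^+ 2 * lk k) &
      b ^+ 2 * lk k * s2 <= x k * (b ^+ 2 * lk k * s2 + c ^+ 2 + s2)].
  move=> h1 h2.
  have := @step_facts R g c s2 (dl g s2 c a0 k).1 (dl g s2 c a0 k).2 hb hs h1 h2.
  by [].
have inv k : [/\ 0 <= lk k, 0 <= e k <= 1 & l0 <= lk k * u k].
  elim: k => [|k [h1 h2 h3]].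
    rewrite /lk /e /u /= mul0r addr0 mulr1 sqr_ge0; split => //.
    apply/andP; split.
      have : b * a0 <= 1 * 1 by apply: ler_pM; lra.
      lra.
    have : 0 <= b * a0 by rewrite mulr_ge0 // ltW.
    lra.
  have [E1 E2 E3 E4] := SF k h1 h2.
  have hl' : 0 <= lk k.+1.
    by rewrite /lk /= /dl_step /= addr_ge0 ?sqr_ge0 // mulr_ge0 ?sqr_ge0.
  split => //.
    case/andP: E2 => E2a E2b; case/andP: h2 => h2a h2b.
    rewrite E1; apply/andP; split; first by rewrite mulr_ge0 // ltW.
    have := ler_wpM2r h2a E2b. rewrite mul1r. lra.
  have -> : u k.+1 = u k + b ^+ 2 * l0.
    by rewrite /u -addn1 natrD; ring.
  apply: (@lam_ind R (lk k) (lk k.+1) l0 (u k) (b ^+ 2)) => //.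
  by rewrite sqr_ge0.
set P : R := b ^+ 2 * s2 * l0.
set K : R := c ^+ 2 + s2.
set Q : R := K * (b ^+ 2 * l0).
have hP : 0 < P by rewrite /P !mulr_gt0 // exprn_gt0.
have hK : 0 < K by rewrite /K; have := sqr_ge0 c; lra.
have hQ : 0 < Q by rewrite /Q !mulr_gt0 // exprn_gt0.
set h : R := P / (P + K + Q).
have hh : 0 < h by rewrite /h divr_gt0 //; lra.
have xlb k : h <= x k * (k%:R + 1).
  have [h1 h2 h3] := inv k.
  have [E1 /andP[E2a E2b] E3 E4] := SF k h1 h2.
  have hx : 0 <= x k by lra.
  have hlk : 0 < lk k.
    have : 0 < lk k * u k by apply: lt_le_trans h3.
    by rewrite pmulr_lgt0.
  have H1 : (b ^+ 2 * s2) * lk k <= x k * ((b ^+ 2 * s2) * lk k + K).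
    have -> : (b ^+ 2 * s2) * lk k = b ^+ 2 * lk k * s2 by ring.
    by rewrite /K addrA.
  have H2 := @x_lb R (x k) (lk k) l0 (u k) (b ^+ 2 * s2) K hl0 hlk hx
    (ltW (mulr_gt0 (exprn_gt0 2 hb0) hs)) (ltW hK) h3 H1.
  apply: (@x_h R (x k) (k%:R) P K Q hx (ler0n _ _) (ltW hQ) (ltW hP) (ltW hK)).
    lra.
  have -> : P + K + k%:R * Q = b ^+ 2 * s2 * l0 + K * u k by rewrite /P /Q /u; ring.
  exact: H2.
pose Sx k : R := \sum_(0 <= i < k) x i.
have main k : e k * (1 + Sx k) <= 1 /\ 0 <= Sx k.
  elim: k => [|k [IH1 IH2]].
    have [_ /andP[_ ?] _] := inv 0%N.
    by rewrite /Sx big_geq // addr0 mulr1.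
  have [h1 h2 h3] := inv k.
  have [E1 E2 E3 E4] := SF k h1 h2.
  have hx : 0 <= x k by case/andP: E2 => ? ?; lra.
  rewrite /Sx big_nat_recr //= -/(Sx k); split; last by rewrite addr_ge0.
  case/andP: h2 => h2a h2b.
  have := @prod_step R (e k) (e k.+1) (x k) (Sx k) h2a IH2 E2 E1.
  lra.
have hser k : h * series harmonic k <= Sx k.
  rewrite /series /= /Sx mulr_sumr; apply: ler_sum => i _.
  rewrite /= ler_pdivrMr ?ltr0n // -natr1.
  exact: xlb.
rewrite -cvg_shiftS /=.
have Hd : series (@harmonic R) @ \oo --> +oo.
  apply: nondecreasing_dvgn_lt; last exact: dvg_harmonic.
  by apply/nondecreasing_seqP => n; rewrite seriesSr lerDl harmonic_ge0.
apply/cvgrPdist_lt => eps heps.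
have heb : 0 < eps * b by rewrite mulr_gt0.
move/cvgryPgt: Hd => /(_ ((eps * b)^-1 / h)) Hd.
near=> k.
have Hk : (eps * b)^-1 / h < series (@harmonic R) k by near: k.
have E : b^-1 - delta g s2 c a0 k.+1 = e k / b.
  by rewrite /e /delta /=; field; rewrite lt0r_neq0.
have [_ /andP[he0 _] _] := inv k.
have [M1 M2] := main k.
have := hser k.
rewrite E ger0_norm ?(divr_ge0 he0 (ltW hb0)) // ltr_pdivrMr // => H.
apply: (@final_ineq R (e k) (Sx k) (eps * b) heb _ M1).
rewrite ltr_pdivrMr // in Hk.
rewrite mulrC in H. lra.
Unshelve. all: by end_near.
Qed.
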